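(* Let $n\ge 1$ be an integer and consider the control system with state $(x_n,z_{n-1},\dots,z_1,z_0)\in\mathbb{R}^{n+1}$ and scalar control $v(t)$: $$\dot x_n=v-x_n,\qquad \dot z_{n-1}=v,\qquad \dot z_k=z_{k+1}\ (0\le k\le n-2),$$ together with the running cost $\frac12\big[(z_0-x_1)^2+x_1^2\big]$, where $$x_1:=\sum_{k=1}^{n-1}(-1)^{k+1}z_k+(-1)^{n+1}x_n$$ (for $n=1$, $x_1$ is simply the state $x_n$). Let $p_n,p_{n-1},\dots,p_0$ be adjoint variables associated respectively with $x_n,z_{n-1},\dots,z_0$, with Pontryagin Hamiltonian $$H_S=p_n(v-x_n)+p_{n-1}v+p_{n-2}z_{n-1}+\dots+p_0z_1-\tfrac12\big[(z_0-x_1)^2+x_1^2\big]$$ (the terms $p_{k-1}z_k$ being absent when $n=1$), and adjoint equations $\dot p_n=-\partial H_S/\partial x_n$, $\dot p_{k}=-\partial H_S/\partial z_k$, i.e. $$\dot p_n=p_n+(-1)^{n+1}(2x_1-z_0),\quad \dot p_k=-p_{k-1}+(-1)^{k+1}(2x_1-z_0)\ (1\le k\le n-1),\quad \dot p_0=z_0-x_1 .$$ Suppose that on an open time interval $I$ a solution of these state and adjoint equations, with a continuous control $v$, satisfies the singularity condition $\partial H_S/\partial v=p_n+p_{n-1}=0$ identically on $I$. Then on $I$ one has $z_0=z_1=\dots=z_{n-1}=v$, and there are constants $Y,Z\in\mathbb{R}$ such that for all $t\in I$ $$z_0(t)=\dots=z_{n-1}(t)=v(t)=Ze^{t},\qquad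 x_n(t)=Ye^{-t}+Z\sinh(t).$$ In particular the singular control $v=Ze^t$ has the same form for every $n$.
   Context: This system arises from the scalar dynamics $\dot x+x=u$ by setting $x_k=x^{(k)}$, $z_k=u^{(k)}$, $v=u^{(n)}$, so that the cost integrand $(z_0-x_1)^2+x_1^2$ equals $x^2+\dot x^2$. For $n=1$, write $y=x_1$, $z=z_0$; the system is $\dot y=v-y$, $\dot z=v$ with cost $\int[(z-y)^2+y^2]dt$. *)

(* Defs.v *)
From Stdlib Require Import Reals Lra Lia.
Open Scope R_scope.

Fixpoint sumR (f : nat -> R) (m : nat) : R :=
  match m with
  | O => 0
  | S m' => sumR f m' + f m'
  end.

Definition is_open_interval (I : R -> Prop) : Prop :=
  (exists t, I t) /\
  (forall x y w, I x -> I w -> x <= y <= w -> I y) /\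
  (forall x, I x -> exists e, e > 0 /\ forall y, Rabs (y - x) < e -> I y).

(* x_1 := sum_{k=1}^{n-1} (-1)^(k+1) z_k + (-1)^(n+1) x_n ;
   here z k t is z_k(t) and xn t is x_n(t). *)
Definition x1 (n : nat) (xn : R -> R) (z : nat -> R -> R) (t : R) : R :=
  sumR (fun j => (-1) ^ (j + 2) * z (j + 1)%nat t) (n - 1)
  + (-1) ^ (n + 1) * xn t.

(* Main.v *)
Require Import Defs.
From Stdlib Require Import Reals Lra Lia.
Open Scope R_scope.

Lemma dval f x l l' : derivable_pt_lim f x l -> l = l' -> derivable_pt_lim f x l'.
Proof. intros H ->; exact H. Qed.

Lemma derive_local (I : R -> Prop) (hI : is_open_interval I) f g t a b :
  I t -> (forall s, I s -> f s = g s) ->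
  derivable_pt_lim f t a -> derivable_pt_lim g t b -> a = b.
Proof.
  intros It Heq Hf Hg.
  destruct hI as [_ [_ Hop]].
  destruct (Hop t It) as [e [He Hb]].
  apply (uniqueness_limite g t a b); [|exact Hg].
  intros eps Heps. destruct (Hf eps Heps) as [d Hd].
  assert (Hm : 0 < Rmin d e) by (apply Rmin_pos; [apply cond_pos|lra]).
  exists (mkposreal _ Hm). intros h hnz hlt. simpl in hlt.
  rewrite <- !Heq; [apply Hd; auto; apply Rlt_le_trans with (1:=hlt); apply Rmin_l| |].
  - exact It.
  - apply Hb. replace (t + h - t) with h by ring.
    apply Rlt_le_trans with (1:=hlt); apply Rmin_r.
Qed.

Lemma const_on (I : R -> Prop) (hI : is_open_interval I) f :
  (forall s, I s -> derivable_pt_lim f s 0) ->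
  forall a b, I a -> I b -> f a = f b.
Proof.
  intros Hd.
  assert (K : forall a b, a <= b -> I a -> I b -> f a = f b).
  { intros a b Hab Ia Ib.
    assert (Iin : forall x, a <= x <= b -> I x).
    { intros x Hx. destruct hI as [_ [Hc _]]. exact (Hc a x b Ia Ib Hx). }
    assert (pr : forall x, a < x < b -> derivable_pt f x).
    { intros x Hx. exists 0. apply Hd, Iin; lra. }
    pose proof (null_derivative_loc f a b pr) as N.
    symmetry. apply N.
    - intros x Hx. apply derivable_continuous_pt. exists 0. apply Hd, Iin; lra.
    - intros x P. destruct (pr x P) as [l Hl] eqn:E. simpl.
      apply (uniqueness_limite f x); [exact Hl|]. apply Hd, Iin; lra.
    - lra. }
  intros a b Ia Ib. destruct (Rle_dec a b).
  - apply K; auto.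
  - symmetry; apply K; auto; lra.
Qed.

Lemma sum_deriv (f : nat -> R -> R) (df : nat -> R) t m :
  (forall j, (j < m)%nat -> derivable_pt_lim (f j) t (df j)) ->
  derivable_pt_lim (fun s => sumR (fun j => f j s) m) t (sumR df m).
Proof.
  induction m; intros H; simpl.
  - apply derivable_pt_lim_const.
  - apply (derivable_pt_lim_plus (fun s => sumR (fun j => f j s) m) (f m)).
    + apply IHm; intros; apply H; lia.
    + apply H; lia.
Qed.

Lemma pm1S k : (-1) ^ (k + 1) = - (-1) ^ k.
Proof. rewrite pow_add; simpl; ring. Qed.
Lemma pm1SS k : (-1) ^ (k + 2) = (-1) ^ k.
Proof. rewrite pow_add; simpl; ring. Qed.
Lemma pm1sq k : (-1) ^ k * (-1) ^ k = 1.
Proof. rewrite <- Rpow_mult_distr. replace (-1 * -1) with 1 by ring. apply pow1. Qed.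

Lemma dexpm s : derivable_pt_lim (fun s => exp (- s)) s (- exp (- s)).
Proof.
  pose proof (derivable_pt_lim_comp (opp_fct id) exp s (-1) (exp (- s))) as H.
  apply (dval _ _ _ _ (H ltac:(apply (dval _ _ (- 1) _ (derivable_pt_lim_opp id s 1 (derivable_pt_lim_id s))); ring) (derivable_pt_lim_exp _))).
  ring.
Qed.
Theorem mainTheorem1 (n : nat) (hn : (1 <= n)%nat)
  (I : R -> Prop) (hI : is_open_interval I)
  (xn v : R -> R) (z p : nat -> R -> R)
  (hv : forall t, I t -> continuity_pt v t)
  (* state equations *)
  (hxn : forall t, I t -> derivable_pt_lim xn t (v t - xn t))
  (hzlast : forall t, I t -> derivable_pt_lim (z (n - 1)%nat) t (v t))
  (hz : forall k t, (k + 2 <= n)%nat -> I t ->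
          derivable_pt_lim (z k) t (z (k + 1)%nat t))
  (* adjoint equations *)
  (hpn : forall t, I t ->
          derivable_pt_lim (p n) t
            (p n t + (-1) ^ (n + 1) * (2 * x1 n xn z t - z 0%nat t)))
  (hpk : forall k t, (1 <= k)%nat -> (k + 1 <= n)%nat -> I t ->
          derivable_pt_lim (p k) t
            (- p (k - 1)%nat t + (-1) ^ (k + 1) * (2 * x1 n xn z t - z 0%nat t)))
  (hp0 : forall t, I t ->
          derivable_pt_lim (p 0%nat) t (z 0%nat t - x1 n xn z t))
  (* singularity condition dH_S/dv = p_n + p_{n-1} = 0 on I *)
  (hsing : forall t, I t -> p n t + p (n - 1)%nat t = 0) :
  (forall t k, I t -> (k < n)%nat -> z k t = v t) /\
  exists Y Z : R, forall t, I t ->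
    (forall k, (k < n)%nat -> z k t = Z * exp t) /\
    v t = Z * exp t /\
    xn t = Y * exp (- t) + Z * sinh t.
Proof.
  set (zz := fun k t => if Nat.ltb k n then z k t else v t).
  assert (zzlt : forall k t, (k < n)%nat -> zz k t = z k t).
  { intros k t Hk. unfold zz. destruct (Nat.ltb_spec k n); [reflexivity|lia]. }
  assert (zzn : forall t, zz n t = v t).
  { intros t. unfold zz. destruct (Nat.ltb_spec n n); [lia|reflexivity]. }
  assert (dz : forall k t, (k < n)%nat -> I t -> derivable_pt_lim (z k) t (zz (k + 1)%nat t)).
  { intros k t Hk It. destruct (Compare_dec.le_lt_dec (k + 2) n) as [H2|H2].
    - rewrite zzlt by lia. apply hz; auto.
    - replace k with (n - 1)%nat by lia. replace (n - 1 + 1)%nat with n by lia.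
      rewrite zzn. apply hzlast; auto. }
  set (X := x1 n xn z).
  set (w := fun t => 2 * X t - z 0%nat t).
  assert (dx1 : forall t, I t -> derivable_pt_lim X t (zz 1%nat t - X t)).
  { intros t It.
    assert (Hs := sum_deriv (fun j s => (-1) ^ (j + 2) * z (j + 1)%nat s)
                (fun j => (-1) ^ (j + 2) * zz (j + 2)%nat t) t (n - 1)).
    assert (Hs' : derivable_pt_lim (fun s => sumR (fun j => (-1) ^ (j + 2) * z (j + 1)%nat s) (n - 1)) t
               (sumR (fun j => (-1) ^ (j + 2) * zz (j + 2)%nat t) (n - 1))).
    { apply Hs. intros j Hj.
      apply (derivable_pt_lim_scal (z (j+1)%nat) ((-1) ^ (j + 2)) t).
      replace (j + 2)%nat with (j + 1 + 1)%nat by lia. apply dz; auto; lia. }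
    clear Hs.
    assert (closed : forall m, (m < n)%nat ->
      sumR (fun j => (-1) ^ (j + 2) * zz (j + 2)%nat t) m =
      zz 1%nat t - sumR (fun j => (-1) ^ (j + 2) * z (j + 1)%nat t) m
      + (-1) ^ (m + 1) * zz (m + 1)%nat t).
    { induction m; intros Hm; simpl sumR.
      - simpl. ring.
      - rewrite IHm by lia. rewrite (zzlt (m+1)%nat) by lia.
        replace (S m + 1)%nat with (m + 2)%nat by lia.
        replace (m + 1)%nat with (S m) by lia.
        replace (S m + 2)%nat with (m + 1 + 2)%nat by lia.
        rewrite pm1SS. change ((-1) ^ S m) with (-1 * (-1) ^ m). ring. }
    pose proof (derivable_pt_lim_plus _ _ t _ _ Hs'
      (derivable_pt_lim_scal xn ((-1) ^ (n + 1)) t _ (hxn t It))) as D.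
    apply (dval _ _ _ _ D).
    rewrite closed by lia. replace (n - 1 + 1)%nat with n by lia. rewrite zzn.
    unfold X, x1. rewrite pm1S. ring. }
  assert (chain : forall d k, (k + d + 1 = n)%nat -> forall t, I t ->
             (-1) ^ k * p n t = (-1) ^ n * p k t).
  { induction d; intros k Hkd t It.
    - assert (n = k + 1)%nat by lia. subst n.
      pose proof (hsing t It) as Hs. 
      rewrite Nat.add_0_r in *. replace (k + 1 - 1)%nat with k in Hs by lia. rewrite pm1S. replace (p (k + 1)%nat t) with (- p k t) by lra. ring.
    - assert (IH := IHd (k + 1)%nat ltac:(lia)).
      pose proof (derivable_pt_lim_scal (p n) ((-1) ^ (k + 1)) t _ (hpn t It)) as D1.
      pose proof (derivable_pt_lim_scal (p (k+1)%nat) ((-1) ^ n) t _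
         (hpk (k+1)%nat t ltac:(lia) ltac:(lia) It)) as D2.
      pose proof (derive_local I hI _ _ t _ _ It IH D1 D2) as E.
      replace (k + 1 - 1)%nat with k in E by lia.
      replace (k + 1 + 1)%nat with (k + 2)%nat in E by lia.
      rewrite pm1SS, !pm1S in E.
      fold X in E.
      set (a := (-1) ^ k) in *. set (b := (-1) ^ n) in *. lra. }
  assert (P0 : forall t, I t -> p n t = (-1) ^ n * X t).
  { intros t It.
    assert (Hc : forall s, I s -> p n s = (-1) ^ n * p 0%nat s).
    { intros s Is. rewrite <- (chain (n-1)%nat 0%nat ltac:(lia) s Is). simpl; ring. }
    pose proof (hpn t It) as D1.
    pose proof (derivable_pt_lim_scal (p 0%nat) ((-1) ^ n) t _ (hp0 t It)) as D2.
    pose proof (derive_local I hI _ _ t _ _ It Hc D1 D2) as E.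
    rewrite pm1S in E. fold X in E. set (b := (-1) ^ n) in *. lra. }
  assert (Z1 : forall t, I t -> zz 1%nat t = z 0%nat t).
  { intros t It.
    pose proof (hpn t It) as D1.
    pose proof (derivable_pt_lim_scal X ((-1) ^ n) t _ (dx1 t It)) as D2.
    pose proof (derive_local I hI _ _ t _ _ It P0 D1 D2) as E.
    rewrite pm1S in E. fold X in E. rewrite P0 in E by exact It.
    assert (Hb : (-1) ^ n * (z 0%nat t - zz 1%nat t) = 0) by lra.
    apply Rmult_integral in Hb. destruct Hb as [Hb|Hb]; [|lra].
    exfalso. apply (pow_nonzero (-1) n); [lra|exact Hb]. }
  assert (ZZ : forall k, (k <= n)%nat -> forall t, I t -> zz k t = z 0%nat t).
  { induction k; intros Hk t It.
    - apply zzlt; lia.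
    - assert (Hzk : forall s, I s -> z k s = z 0%nat s).
      { intros s Is. rewrite <- zzlt by lia. apply IHk; auto; lia. }
      pose proof (derive_local I hI _ _ t _ _ It Hzk (dz k t ltac:(lia) It) (dz 0%nat t ltac:(lia) It)) as E.
      replace (k + 1)%nat with (S k) in E by lia. simpl in E. rewrite E. apply Z1; auto. }
  assert (Hv : forall t, I t -> v t = z 0%nat t).
  { intros t It. rewrite <- zzn. apply ZZ; auto. }
  assert (Hzk : forall t k, I t -> (k < n)%nat -> z k t = v t).
  { intros t k It Hk. rewrite Hv, <- zzlt by auto. apply ZZ; auto; lia. }
  split; [exact Hzk|].
  destruct hI as [[t0 It0] Hrest] eqn:EI.
  set (Z := z 0%nat t0 * exp (- t0)).
  assert (HZ : forall t, I t -> z 0%nat t = Z * exp t).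
  { intros t It.
    assert (C : z 0%nat t * exp (- t) = Z).
    { apply (const_on I hI (fun s => z 0%nat s * exp (- s))); auto.
      intros s Is.
      pose proof (derivable_pt_lim_mult _ _ s _ _ (dz 0%nat s ltac:(lia) Is) (dexpm s)) as D.
      apply (dval _ _ _ _ D). rewrite Z1 by auto. ring. }
    rewrite <- C. rewrite Rmult_assoc, <- exp_plus. replace (- t + t) with 0 by ring.
    rewrite exp_0; ring. }
  set (Y := (xn t0 - Z * sinh t0) * exp t0).
  exists Y, Z. intros t It.
  assert (Hvt : forall s, I s -> v s = Z * exp s) by (intros; rewrite Hv; auto).
  split; [intros k Hk; rewrite Hzk by auto; auto|].
  split; [auto|].
  assert (C : (xn t - Z * sinh t) * exp t = Y).
  { apply (const_on I hI (fun s => (xn s - Z * sinh s) * exp s)); auto.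
    intros s Is.
    pose proof (derivable_pt_lim_mult _ _ s _ _
      (derivable_pt_lim_minus _ _ s _ _ (hxn s Is)
         (derivable_pt_lim_scal sinh Z s _ (derivable_pt_lim_sinh s)))
      (derivable_pt_lim_exp s)) as D.
    apply (dval _ _ _ _ D). rewrite Hvt by auto. unfold cosh, sinh. unfold minus_fct, mult_real_fct. field. }
  rewrite <- C. rewrite Rmult_assoc, <- exp_plus. replace (t + - t) with 0 by ring.
  rewrite exp_0; ring.
Qed.
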